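(* For every $r>2$ there exists a constant $c$, independent of $N\ge2$ and $d\ge1$, such that for any random variables $Q_1,\dots,Q_N$ each of which (marginally) has the $\chi^2(d)$ distribution, \[ \mathbb P\Big(\max_{1\le i\le N}Q_i>r\log N\Big)\le\Big(\frac1N\Big)^{(r-2)/4}e^{cd}. \] *)

(* Defs.v *)
From HB Require Import structures.
From mathcomp Require Import all_boot all_order all_algebra.
From mathcomp Require Import all_classical all_reals all_analysis.
Set Implicit Arguments. Unset Strict Implicit. Unset Printing Implicit Defensive.
Import Order.TTheory GRing.Theory Num.Theory.
Local Open Scope classical_set_scope.
Local Open Scope ring_scope.

Definition chi2_kernel (R : realType) (d : nat) (x : R) : R :=
  if 0 < x then x `^ (d%:R / 2 - 1) * expR (- x / 2) else 0.

(* Normalizing constant (= 2^(d/2) Gamma(d/2)). *)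
Definition chi2_norm (R : realType) (d : nat) : R :=
  fine (\int[@lebesgue_measure R]_(x in [set: R]) (chi2_kernel d x)%:E)%E.

Definition chi2_pdf (R : realType) (d : nat) (x : R) : R :=
  chi2_kernel d x / chi2_norm R d.

Definition has_chi2_distribution (dT : measure_display) (T : measurableType dT)
    (R : realType) (P : probability T R) (d : nat) (X : {RV P >-> R}) : Prop :=
  forall A : set R, measurable A ->
    distribution P X A = (\int[@lebesgue_measure R]_(x in A) (chi2_pdf d x)%:E)%E.
Arguments has_chi2_distribution {dT T R} P d%_nat X.

(* Main.v *)
Require Import Defs.
From HB Require Import structures.
From mathcomp Require Import all_boot all_order all_algebra.
From mathcomp Require Import all_classical all_reals all_analysis.
From mathcomp Require Import measurable_realfun.
From mathcomp.algebra_tactics Require Import ring lra.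
Import Order.TTheory GRing.Theory Num.Theory.
Import numFieldNormedType.Exports.
Local Open Scope classical_set_scope.
Local Open Scope ring_scope.
Section S.
Variable R : realType.
Lemma cont_max (c : R) : continuous (fun x : R => Num.max x c).
Proof.
move=> x.
have h1 : {for x, continuous (fun y : R => (y, c))}.
  exact: (cvg_pair (@cvg_id _ (nbhs x)) (cvg_cst c)).
have := @continuous_comp _ _ _ (fun y : R => (y, c)) (fun xy : R * R => Num.max xy.1 xy.2) x h1.
apply.
exact: max_continuous.
Qed.
Definition Gc (p n c : R) (x : R) : R :=
  expR (p * ln (Num.max x c) - Num.max x c / 2) / n.

Lemma cont_Gc p n c : 0 < c -> continuous (Gc p n c).
Proof.
move=> c0 x.
have hy : 0 < Num.max x c by rewrite lt_max c0 orbT.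
have h2 : {for Num.max x c, continuous (fun y => expR (p * ln y - y / 2) / n)}.
  apply: cvgMl.
  have h3 : {for Num.max x c, continuous (fun y => p * ln y - y / 2)}.
    apply: cvgB.
      apply: cvgMr. exact: continuous_ln.
    apply: cvgMl. exact: cvg_id.
  exact: (@continuous_comp _ _ _ _ expR _ h3 (@continuous_expR R _)).
exact: (@continuous_comp _ _ _ _ _ x (cont_max c x) h2).
Qed.

Lemma Gc_pdf (d : nat) c x : 0 < c -> c <= x ->
  Gc (d%:R / 2 - 1) (chi2_norm R d) c x = chi2_pdf d x.
Proof.
move=> c0 cx.
have x0 : 0 < x by apply: lt_le_trans cx.
rewrite /Gc /chi2_pdf /chi2_kernel x0 (max_idPl cx) /powR gt_eqF //.
by rewrite -expRD mulNr.
Qed.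

Lemma chi2_norm_ge0 d : 0 <= chi2_norm R d.
Proof.
rewrite /chi2_norm; apply: fine_ge0; apply: integral_ge0 => x _.
rewrite lee_fin /chi2_kernel; case: ifP => // _.
by apply: mulr_ge0; [exact: powR_ge0 | exact: expR_ge0].
Qed.

Lemma tail (d : nat) (dT : measure_display) (T : measurableType dT)
  (P : probability T R) (X : {RV P >-> R}) (a b : R) :
  has_chi2_distribution P d X -> 0 < a - b -> 0 <= b ->
  (P (X @^-1` `[a, +oo[) <=
     (expR ((d%:R / 2) * (ln a - ln (a - b)) - b / 2))%:E)%E.
Proof.
move=> hX a00 b0.
set a0 := a - b; set p : R := d%:R / 2 - 1; set n := chi2_norm R d.
have a0a : a = a0 + b by rewrite /a0 subrK.
have a_gt0 : 0 < a by rewrite a0a; lra.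
have -> : P (X @^-1` `[a, +oo[) = distribution P X `[a, +oo[ by [].
rewrite hX //.
have -> : (\int[lebesgue_measure]_(x in `[a, +oo[) (chi2_pdf d x)%:E =
           \int[lebesgue_measure]_(x in `[a, +oo[) (Gc p n a x)%:E)%E.
  apply: eq_integral => x; rewrite inE /= in_itv /= andbT => ax.
  by rewrite /p /n Gc_pdf.
set F := fun x : R => x + b.
have Fa : a = F a0 by rewrite /F.
have F1 : F^`()%classic = cst 1.
  apply/funext => x; rewrite /F derive1E deriveD// derive_id derive_cst addr0.
  by [].
rewrite [X in `[X, +oo[]Fa.
rewrite (@increasing_ge0_integration_by_substitutiony R F (Gc p n a) a0).
2: by move=> x y _ _ /=; rewrite /F ltrD2r.
2: by rewrite F1 => x _; exact: cvg_cst.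
2: by rewrite F1; exact: is_cvg_cst.
2: by rewrite F1; exact: is_cvg_cst.
2: { split.
     - by move=> x _; rewrite /F; apply: derivableD.
     - apply: cvg_at_right_filter; rewrite /F.
       by apply: cvgD; [exact: cvg_id|exact: cvg_cst]. }
2: exact: cvg_addrr.
2: by apply: continuous_subspaceT; exact: cont_Gc.
2: by move=> x _; rewrite /Gc; apply: divr_ge0; [exact: expR_ge0 | exact: chi2_norm_ge0].
set C := expR _.
have a0_gt0 : 0 < a0 by [].
have mG : forall c, 0 < c -> measurable_fun [set: R] (Gc p n c).
  by move=> c c0; apply: continuous_measurable_fun; exact: cont_Gc.
rewrite F1.
have -> : (\int[lebesgue_measure]_(x in `[a0, +oo[)
      (((Gc p n a \o F) * cst 1) x)%:E =
      \int[lebesgue_measure]_(x in `[a0, +oo[) (Gc p n a (x + b))%:E)%E.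
  by apply: eq_integral => x _; rewrite /= mulr1.
apply: (@le_trans _ _ (\int[lebesgue_measure]_(x in `[a0, +oo[) ((C * Gc p n a0 x)%:E))%E).
  apply: ge0_le_integral => //.
  - by move=> x _; rewrite lee_fin /Gc; apply: divr_ge0; [exact: expR_ge0 | exact: chi2_norm_ge0].
  - apply/measurable_EFinP; apply: (measurable_funS measurableT) => //.
    apply: measurableT_comp; first exact: mG.
    exact: measurable_funD.
  - apply/measurable_EFinP; apply: (measurable_funS measurableT) => //.
    apply: measurable_funM => //; exact: mG.
  - move=> x; rewrite /= in_itv /= andbT => a0x.
    rewrite lee_fin.
    have x0 : 0 < x by apply: lt_le_trans a0x.
    have xb : a <= x + b by rewrite a0a lerD2r.
    rewrite /Gc (max_idPl xb) (max_idPl a0x) mulrA.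
    apply: ler_wpM2r; first by rewrite invr_ge0 chi2_norm_ge0.
    rewrite /C -expRD ler_expR.
    have xb0 : 0 < x + b by lra.
    have L1 : ln x <= ln (x + b) by rewrite ler_ln ?posrE //; lra.
    have L2 : ln (x + b) + ln a0 <= ln a + ln x.
      rewrite -!lnM ?posrE // ler_ln ?posrE ?mulr_gt0 //.
      rewrite a0a; nra.
    have q0 : 0 <= d%:R / 2 :> R by apply: divr_ge0.
    rewrite /p; move: q0 L1 L2; set q := d%:R / 2; move=> q0 L1 L2.
    nra.
under eq_integral do rewrite EFinM.
rewrite ge0_integralZl //; last first.
  - by rewrite lee_fin expR_ge0.
  - by move=> x _; rewrite lee_fin /Gc; apply: divr_ge0; [exact: expR_ge0 | exact: chi2_norm_ge0].
  - apply/measurable_EFinP; apply: (measurable_funS measurableT) => //; exact: mG.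
have -> : (\int[lebesgue_measure]_(x in `[a0, +oo[) (Gc p n a0 x)%:E =
           \int[lebesgue_measure]_(x in `[a0, +oo[) (chi2_pdf d x)%:E)%E.
  apply: eq_integral => x; rewrite inE /= in_itv /= andbT => ax.
  by rewrite /p /n Gc_pdf.
rewrite -hX //.
rewrite -[X in (_ <= X)%E]mule1.
apply: lee_wpmul2l; first by rewrite lee_fin expR_ge0.
apply: probability_le1.
exact: measurable_itv.
Qed.
End S.

Theorem lemma5 (R : realType) (r : R) (hr : 2 < r) :
  exists c : R,
    forall (N d : nat), (2 <= N)%N -> (1 <= d)%N ->
    forall (dT : measure_display) (T : measurableType dT) (P : probability T R)
           (Q : 'I_N -> {RV P >-> R}),
      (forall i, has_chi2_distribution P d (Q i)) ->
      (P [set t | ((r * ln N%:R)%:E < \big[Order.max/-oo]_(i < N) (Q i t)%:E)%E]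
        <= ((N%:R^-1) `^ ((r - 2) / 4) * expR (c * d%:R))%:E)%E.
Proof.
set th := (r + 2) / (2 * r).
have r0 : 0 < r by lra.
have th1 : 0 < 1 - th.
  rewrite /th; rewrite subr_gt0 ltr_pdivrMr; last lra.
  lra.
have th0 : 0 <= th by rewrite /th; apply: divr_ge0; lra.
exists (- ln (1 - th) / 2).
move=> N d N2 d1 dT T P Q hQ.
have N1 : 1 < N%:R :> R by rewrite ltr1n.
have lnN : 0 < ln (N%:R : R) by apply: ln_gt0.
set a := r * ln N%:R.
have a0 : 0 < a by apply: mulr_gt0.
set b := th * a.
have ab : a - b = (1 - th) * a by rewrite /b; ring.
have ab0 : 0 < a - b by rewrite ab mulr_gt0.
have b0 : 0 <= b by rewrite /b mulr_ge0 // ltW.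
set B := expR (- ln (1 - th) / 2 * d%:R - b / 2).
have tailQ : forall i, (P (Q i @^-1` `[a, +oo[) <= B%:E)%E.
  move=> i; apply: le_trans; first exact: (@tail R d dT T P (Q i) a b (hQ i) ab0 b0).
  rewrite lee_fin ler_expR /B ab (@lnM R (1 - th) a) ?posrE //.
  by rewrite le_eqVlt; apply/orP; left; apply/eqP; ring.
pose F (k : nat) : set T :=
  if @insub _ (fun k => (k < N)%N) 'I_N k is Some i then Q i @^-1` `]a, +oo[ else set0.
have FE (i : 'I_N) : F i = Q i @^-1` `]a, +oo[ by rewrite /F valK.
have mF k : measurable (F k).
  rewrite /F; case: insub => [i|//].
  by apply: measurable_funPTI; exact: measurable_itv.
have hA : [set t | (a%:E < \big[Order.max/-oo]_(i < N) (Q i t)%:E)%E] =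
          \big[setU/set0]_(k < N) F k.
  rewrite -bigcup_mkord; apply/seteqP; split.
  - move=> t /= h.
    have : exists i : 'I_N, (a%:E < (Q i t)%:E)%E.
      move: h; apply: (big_ind (fun y => (a%:E < y)%E -> exists i : 'I_N, (a%:E < (Q i t)%:E)%E)) => //.
      move=> x y hx hy; rewrite lt_max => /orP[/hx|/hy] //.
      by move=> i _ h; exists i.
    move=> [i hi]; exists (val i); first exact: ltn_ord.
    by rewrite /F valK /= in_itv /= andbT -lte_fin.
  - move=> t [k /= kN]; set i := Ordinal kN.
    rewrite -[k]/(val i) /F valK /= in_itv /= andbT => h.
    apply: (lt_le_trans _ (le_bigmax _ _ i)).
    by rewrite lte_fin.
rewrite hA.
apply: le_trans.
  apply: (content_subadditive P (n := N)) => //.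
  exact: bigsetU_measurable.
apply: (@le_trans _ _ (\sum_(k < N) B%:E)%E).
  apply: lee_sum => k _.
  apply: le_trans; last exact: (tailQ k).
  rewrite FE; apply: le_measure; rewrite ?inE.
  - by apply: measurable_funPTI; exact: measurable_itv.
  - by apply: measurable_funPTI; exact: measurable_itv.
  - by move=> t /=; rewrite !in_itv /= !andbT; apply: ltW.
rewrite sumEFin sumr_const card_ord lee_fin.
have N0 : (0 : R) < N%:R by lra.
have thr : th * r = (r + 2) / 2 by rewrite /th; field; lra.
have NP : (N%:R : R) \is Num.pos by rewrite posrE.
have E1 : B *+ N = expR (ln N%:R + (- ln (1 - th) / 2 * d%:R - b / 2)).
  by rewrite expRD (lnK NP) mulr_natl.
have E2 : (N%:R^-1 : R) `^ ((r - 2) / 4) = expR ((r - 2) / 4 * - ln (N%:R : R)).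
  rewrite /powR ifF; first by rewrite lnV.
  by apply/negbTE; rewrite invr_eq0 gt_eqF.
rewrite E1 E2 -expRD ler_expR /b /a mulrA thr.
rewrite le_eqVlt; apply/orP; left; apply/eqP; field.
all: by [].
Qed.
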